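(* Let $\mathcal{X}=\mathcal{X}_1\times\cdots\times\mathcal{X}_n$ and $\mathcal{Y}=\mathcal{Y}_1\times\cdots\times\mathcal{Y}_m$ be finite sets, and let $k\in\{1,\ldots,n\}$. Let $\mathcal{P}$ be the partition model on $\mathcal{X}$ whose blocks are the sets $\{x_1\}\times\cdots\times\{x_k\}\times\mathcal{X}_{k+1}\times\cdots\times\mathcal{X}_n$ for all $(x_1,\ldots,x_k)\in\mathcal{X}_1\times\cdots\times\mathcal{X}_k$. If $$1+\sum_{j\in[m]}(|\mathcal{Y}_j|-1)\;\geq\;\Big(\prod_{i\in[k]}|\mathcal{X}_i|\Big)\Big/\max_{j\in[k]}|\mathcal{X}_j|,$$ then every distribution contained in $\mathcal{P}$ can be approximated arbitrarily well by distributions from $\operatorname{RBM}_{\mathcal{X},\mathcal{Y}}$ (i.e., $\mathcal{P}$ is contained in the topological closure of $\operatorname{RBM}_{\mathcal{X},\mathcal{Y}}$).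
   Context: For a finite product set $\mathcal{Z}=\mathcal{Z}_1\times\cdots\times\mathcal{Z}_k$, fix in each $\mathcal{Z}_i$ a reference state $z_i^0$ and let $F^{\mathcal{Z}}(z)=\big(1,(\mathbb{1}[z_i=a])_{i\in[k],\,a\in\mathcal{Z}_i\setminus\{z_i^0\}}\big)^\top$ be the sufficient statistics of the independence model on $\mathcal{Z}$. The restricted Boltzmann machine model $\operatorname{RBM}_{\mathcal{X},\mathcal{Y}}$ with visible states $\mathcal{X}$ and hidden states $\mathcal{Y}$ is the set of probability distributions on $\mathcal{X}$ of the form $p(x)=\frac{1}{Z(\Theta)}\sum_{y\in\mathcal{Y}}\exp\big(F^{\mathcal{X}}(x)^\top\Theta F^{\mathcal{Y}}(y)\big)$, $x\in\mathcal{X}$, for all real matrices $\Theta$ of the appropriate size, where $Z(\Theta)$ is the normalizing constant (i.e., the visible marginals of the exponential family on $\mathcal{X}\times\mathcal{Y}$ with sufficient statistics $F^{\mathcal{X}}(x)\otimes F^{\mathcal{Y}}(y)$). Given disjoint nonempty sets $A_1,\ldots,A_K\subseteq\mathcal{X}$ covering $\mathcal{X}$, the partition model with these blocks is the set of all mixtures $\sum_{k}\lambda_k u_{A_k}$ with $\lambda_k\ge 0$, $\sum_k\lambda_k=1$, where $u_{A_k}$ is the uniform distribution on $A_k$. *)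

(* Defs.v *)
From HB Require Import structures.
From mathcomp Require Import all_boot all_order all_algebra.
From mathcomp Require Import reals sequences exp.
Set Implicit Arguments. Unset Strict Implicit. Unset Printing Implicit Defensive.
Import Order.TTheory GRing.Theory Num.Theory.
Local Open Scope ring_scope.

(* A finite product set Z_1 x ... x Z_n with |Z_i| = s i; Z_i = 'I_(s i).
   The reference state z_i^0 of Z_i is the element 0. *)
Definition state (n : nat) (s : 'I_n -> nat) : finType :=
  {dffun forall i : 'I_n, 'I_(s i)}.

(* Index set of the sufficient statistics: None is the constant 1,
   Some (i, a) is the indicator [z_i = a.+1] (a.+1 ranges over Z_i \ {0}). *)
Definition feat (n : nat) (s : 'I_n -> nat) : finType :=
  option {i : 'I_n & 'I_(s i).-1}.

Definition suffstat (R : realType) (n : nat) (s : 'I_n -> nat)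
  (z : state s) (u : feat s) : R :=
  match u with
  | None => 1
  | Some (existT i a) => if val (z i) == (val a).+1 then 1 else 0
  end.

Definition rbm_weight (R : realType) (n m : nat) (sx : 'I_n -> nat)
  (sy : 'I_m -> nat) (Theta : feat sx -> feat sy -> R) (x : state sx) : R :=
  \sum_(y : state sy)
     expR (\sum_(u : feat sx) \sum_(v : feat sy)
             suffstat R x u * Theta u v * suffstat R y v).

Definition rbm (R : realType) (n m : nat) (sx : 'I_n -> nat)
  (sy : 'I_m -> nat) (Theta : feat sx -> feat sy -> R) (x : state sx) : R :=
  rbm_weight Theta x / \sum_(x' : state sx) rbm_weight Theta x'.

Definition unif (R : realType) (T : finType) (A : {set T}) (x : T) : R :=
  (x \in A)%:R / #|A|%:R.

Definition in_partition_model (R : realType) (T : finType)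
  (blocks : {set {set T}}) (p : T -> R) : Prop :=
  exists lam : {set T} -> R,
    (forall A, A \in blocks -> 0 <= lam A) /\
    \sum_(A in blocks) lam A = 1 /\
    forall x, p x = \sum_(A in blocks) lam A * unif R A x.

Definition prefix_block (n : nat) (sx : 'I_n -> nat) (k : nat) (x : state sx)
  : {set state sx} :=
  [set x' : state sx | [forall i : 'I_n, (i < k)%N ==> (x' i == x i)]].

Definition prefix_blocks (n : nat) (sx : 'I_n -> nat) (k : nat)
  : {set {set state sx}} :=
  [set prefix_block k x | x : state sx].

(* Main.v *)
Require Import Defs.
From HB Require Import structures.
From mathcomp Require Import all_boot all_order all_algebra.
From mathcomp Require Import reals sequences exp.
From mathcomp Require Import ring lra zify.
Set Implicit Arguments. Unset Strict Implicit. Unset Printing Implicit Defensive.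
Import Order.TTheory GRing.Theory Num.Theory.
Local Open Scope ring_scope.

Section Gen.
Variable R : realType.

Lemma sum_option (T : finType) (f : option T -> R) :
  \sum_(v : option T) f v = f None + \sum_(s : T) f (Some s).
Proof.
have -> : \sum_(v : option T) f v = f None + \sum_(v : option T) oapp (fun s => f (Some s)) 0 v.
  rewrite (bigD1 None) //= [X in _ = _ + X](bigD1 None) //= add0r; congr (_ + _).
  by apply: eq_bigr => -[s|].
congr (_ + _); rewrite -big_enum /= -(big_pmap id).
rewrite -[RHS]big_enum; apply: perm_big; apply: uniq_perm.
- by apply: (@pmap_uniq _ _ id Some); [case | exact: enum_uniq].
- exact: enum_uniq.
by move=> s; rewrite mem_pmap map_id mem_enum mem_enum.
Qed.

Lemma sum_sigT (I : finType) (T_ : I -> finType) (f : {i : I & T_ i} -> R) :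
  \sum_(s : {i : I & T_ i}) f s = \sum_(i : I) \sum_(a : T_ i) f (existT _ i a).
Proof.
rewrite (sig_big_dep (fun _ => true) (fun _ _ => true)) /=.
by apply: eq_bigr => -[i a].
Qed.

Lemma normalize (T : finType) (p rho : T -> R) (d e : R) :
  (forall x, 0 <= p x) -> \sum_x p x = 1 -> 0 <= d -> 0 <= e ->
  (forall x, p x + d <= rho x <= p x + d + e) ->
  forall x, `|p x - rho x / \sum_x' rho x'| <= (#|T|%:R + 1) * (d + e).
Proof.
move=> p0 p1 d0 e0 hr x.
set S := \sum_x' rho x'.
have S1 : 1 + #|T|%:R * d <= S.
  rewrite /S mulr_natl -sumr_const -{1}p1 -big_split /=.
  by apply: ler_sum => y _; case/andP: (hr y).
have S2 : S <= 1 + #|T|%:R * (d + e).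
  rewrite /S mulr_natl -sumr_const -{1}p1 -big_split /=.
  by apply: ler_sum => y _; case/andP: (hr y) => _; rewrite addrA.
have px1 : p x <= 1.
  by rewrite -p1 (bigD1 x) //= lerDl sumr_ge0.
have N0 : (0 : R) <= #|T|%:R by [].
have Nd : 0 <= #|T|%:R * d by apply: mulr_ge0.
have Sp : 0 < S by lra.
have -> : p x - rho x / S = (p x * S - rho x) / S.
  by rewrite mulrBl mulfK // gt_eqF.
rewrite normrM normfV (gtr0_norm Sp) ler_pdivrMr //.
have hx := hr x; case/andP: hx => hx1 hx2.
have A1 : p x * S <= p x * (1 + #|T|%:R * (d + e)) by apply: ler_wpM2l.
have A2 : p x <= p x * S by rewrite -{1}(mulr1 (p x)); apply: ler_wpM2l => //; lra.
have A3 : p x * (#|T|%:R * (d + e)) <= #|T|%:R * (d + e).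
  by rewrite -[leRHS](mul1r (_ * _)); apply: ler_wpM2r => //; apply: mulr_ge0 => //; lra.
rewrite ler_norml; apply/andP; split; nra.
Qed.
End Gen.

Section Lin.
Variable R : realType.
Variables (n : nat) (sx : 'I_n -> nat).

Definition Tof (phi : 'I_n -> nat -> R) (u : feat sx) : R :=
  match u with
  | None => \sum_i phi i 0%N
  | Some (existT i a) => phi i (val a).+1 - phi i 0%N
  end.

Lemma inner_sum (s : nat) (c : nat) (h : (c < s)%N) (f : nat -> R) :
  \sum_(a : 'I_s.-1) (if c == (val a).+1 then 1 else 0) * f (val a).+1
  = if c == 0%N then 0 else f c.
Proof.
case: c h => [|m] h /=.
  by rewrite big1 // => a _; rewrite mul0r.
have hm : (m < s.-1)%N by move: h; case: s => //.
rewrite (bigD1 (Ordinal hm)) //= eqxx mul1r big1 ?addr0 // => a.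
rewrite eqSS -val_eqE /= eq_sym => /negbTE ->; by rewrite mul0r.
Qed.

Lemma Tof_sum (phi : 'I_n -> nat -> R) (x : state sx) :
  \sum_u suffstat R x u * Tof phi u = \sum_i phi i (val (x i)).
Proof.
rewrite sum_option sum_sigT /= mul1r -big_split /=.
apply: eq_bigr => i _.
under eq_bigr => a _ do rewrite mulrBr.
rewrite sumrB (inner_sum (ltn_ord (x i)) (phi i)).
rewrite (inner_sum (ltn_ord (x i)) (fun _ => phi i 0%N)).
by case: eqP => [->|_]; rewrite ?subrr ?addr0 // addrC subrK.
Qed.
End Lin.

Section Weight.
Variable R : realType.
Variables (n m : nat) (sx : 'I_n -> nat) (sy : 'I_m -> nat).
Variable Phi : feat sy -> 'I_n -> nat -> R.

Definition ThetaOf : feat sx -> feat sy -> R := fun u v => Tof (Phi v) u.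
Definition Bof (phi : 'I_n -> nat -> R) (x : state sx) : R :=
  \sum_i phi i (val (x i)).

Lemma weight_eq (x : state sx) :
  rbm_weight ThetaOf x = \sum_(y : state sy)
    expR (Bof (Phi None) x + \sum_s Bof (Phi (Some s)) x * suffstat R y (Some s)).
Proof.
apply: eq_bigr => y _; congr expR.
rewrite exchange_big /=.
have -> : \sum_(v : feat sy) \sum_(u : feat sx)
   suffstat R x u * ThetaOf u v * suffstat R y v =
   \sum_(v : feat sy) Bof (Phi v) x * suffstat R y v.
  apply: eq_bigr => v _; rewrite -mulr_suml; congr (_ * _).
  exact: Tof_sum.
by rewrite sum_option /= mulr1.
Qed.
End Weight.

Section Ysum.
Variable R : realType.
Variables (m : nat) (sy : 'I_m -> nat) (hsy : forall j, (0 < sy j)%N).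
Local Notation S := {j : 'I_m & 'I_(sy j).-1}.

Definition Fy (y : state sy) (s : S) : R := suffstat R y (Some s).

Lemma Fy_def y (s : S) :
  Fy y s = if val (y (tag s)) == (val (tagged s)).+1 then 1 else 0.
Proof. by case: s. Qed.

Lemma Fy01 y s : Fy y s = 0 \/ Fy y s = 1.
Proof. by rewrite Fy_def; case: ifP; [right|left]. Qed.

Definition gval (v : feat sy) (j : 'I_m) : nat :=
  match v with
  | None => 0%N
  | Some s => if j == tag s then (val (tagged s)).+1 else 0%N
  end.

Lemma gval_lt v j : (gval v j < sy j)%N.
Proof.
case: v => [[j0 t]|] /=; last exact: hsy.
case: eqP => [->|_]; last exact: hsy.
have := ltn_ord t; have := hsy j0; lia.
Qed.

Definition gy (v : feat sy) : state sy :=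
  [ffun j : 'I_m => (insubd (Ordinal (hsy j)) (gval v j) : 'I_(sy j))].

Lemma val_gy v j : val (gy v j) = gval v j.
Proof. by rewrite ffunE val_insubd gval_lt. Qed.

Lemma Fg_None s : Fy (gy None) s = 0.
Proof. by rewrite Fy_def val_gy. Qed.

Lemma Fg_Some w s : Fy (gy (Some w)) s = if s == w then 1 else 0.
Proof.
rewrite Fy_def val_gy /=.
case: s => j a; case: w => j0 t /=.
case: (eqVneq j j0) => [ej|nj].
  subst j0; rewrite eqSS.
  have -> : (existT (fun j1 => 'I_(sy j1).-1) j a == existT _ j t) = (a == t).
    by apply/eqP/eqP => [h|->//]; exact: (eq_from_Tagged h).
  by rewrite eq_sym.
rewrite /=; case: eqP => // h.
by move: nj; have := EqdepFacts.eq_sigT_fst h => ->; rewrite eqxx.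
Qed.

Lemma act_lt (y : state sy) j : val (y j) != 0%N -> ((val (y j)).-1 < (sy j).-1)%N.
Proof. move=> h; have := ltn_ord (y j); move: h; rewrite /=; lia. Qed.

Definition act (y : state sy) j (h : val (y j) != 0%N) : S :=
  existT _ j (Ordinal (act_lt h)).

Lemma F_act y j h : Fy y (@act y j h) = 1.
Proof. rewrite Fy_def /= prednK ?eqxx //; by rewrite lt0n. Qed.

Lemma exists_active (y : state sy) (v : feat sy) :
  y != gy v -> y != gy None -> exists s, Fy y s = 1 /\ Some s != v.
Proof.
move=> ng n0.
case: (pickP (fun j => val (y j) != 0%N)) => [j hj|h]; last first.
  case/eqP: n0; apply/ffunP => j; apply: val_inj; rewrite val_gy /=.
  by have := h j => /negbFE/eqP.
case: (eqVneq (Some (act hj)) v) => [ev|ne]; last by exists (act hj); rewrite F_act.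
subst v.
case: (pickP (fun j' => val (y j') != val (gy (Some (act hj)) j'))) => [j' hj'|h]; last first.
  case/eqP: ng; apply/ffunP => j'; apply: val_inj.
  by have := h j' => /negbFE/eqP.
move: hj'; rewrite val_gy /=.
case: (eqVneq j' j) => [->|nj] hj'.
  by move: hj'; rewrite prednK ?eqxx // lt0n.
exists (@act y j' hj'); rewrite F_act; split => //.
apply/eqP => -[] e _.
by move: nj; rewrite e eqxx.
Qed.

Lemma ysum (b0 : R) (b : S -> R) (v : feat sy) (l U T : R) :
  b0 + (if v is Some w then b w else 0) = l ->
  (forall s, Some s != v -> b s <= - T) ->
  (v != None -> b0 <= U - T) ->
  l <= U -> 0 <= T ->
  expR l <= \sum_(y : state sy) expR (b0 + \sum_s b s * Fy y s) <=
  expR l + #|state sy|%:R * expR (U - T).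
Proof.
move=> ha hb hc hl hT.
have Eg : b0 + \sum_s b s * Fy (gy v) s = l.
  rewrite -ha; congr (_ + _); case: v {ha hb hc} => [w|].
    rewrite (bigD1 w) //= Fg_Some eqxx mulr1 big1 ?addr0 // => s /negbTE ns.
    by rewrite Fg_Some ns mulr0.
  by rewrite big1 // => s _; rewrite Fg_None mulr0.
have Eb : forall y, y != gy v -> b0 + \sum_s b s * Fy y s <= U - T.
  move=> y ny.
  case: (eqVneq y (gy None)) => [ey|n0].
    subst y; rewrite big1 ?addr0; last by move=> s _; rewrite Fg_None mulr0.
    by apply: hc; apply: contra ny => /eqP ->.
  have [s2 [F2 ns2]] := exists_active ny n0.
  pose c s := if Some s == v then Num.max (b s) 0 else 0.
  have c0 : forall s, 0 <= c s by move=> s; rewrite /c; case: ifP => // _; rewrite le_max lexx orbT.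
  have cs : \sum_s c s = if v is Some w then Num.max (b w) 0 else 0.
    rewrite /c; clear c0 c; case: v {ha hb hc ny ns2 Eg} => [w|].
      rewrite (bigD1 w) //= eqxx big1 ?addr0 // => s ns.
      by case: eqP => // -[] e; move: ns; rewrite e eqxx.
    by rewrite big1.
  have bc : forall s, b s * Fy y s <= c s.
    move=> s; rewrite /c; case: ifP => [_|/negbT nv].
      by case: (Fy01 y s) => ->; rewrite ?mulr0 ?mulr1 le_max ?lexx ?orbT.
    by case: (Fy01 y s) => ->; rewrite ?mulr0 ?mulr1 //; have := hb s nv; lra.
  rewrite (bigD1 s2) //= F2 mulr1.
  have : \sum_(s | s != s2) b s * Fy y s <= \sum_s c s.
    apply: (le_trans (ler_sum _ (fun s _ => bc s))).
    by rewrite [leRHS](bigD1 s2) //= lerDr.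
  rewrite cs => hsum.
  have hs2 := hb s2 ns2.
  move: hsum; case E: v ha hc => [w|] /= ha hc hsum; last first.
    by rewrite -ha addr0 in hl; lra.
  have h1 : b0 <= U - T by apply: hc.
  have : b0 + Num.max (b w) 0 <= U.
    rewrite maxEle; case: ifP => hw; lra.
  lra.
rewrite (bigD1 (gy v)) //= Eg; apply/andP; split.
  by rewrite lerDl; apply: sumr_ge0 => y _; exact: expR_ge0.
rewrite lerD2l.
have H : \sum_(y | y != gy v) expR (b0 + \sum_s b s * Fy y s) <= \sum_(y | y != gy v) expR (U - T).
  by apply: ler_sum => y hy; rewrite ler_expR; apply: Eb.
apply: le_trans H _.
rewrite [leRHS](_ : _ = \sum_(y : state sy) expR (U - T)); last by rewrite sumr_const mulr_natl.
by rewrite [leRHS](bigD1 (gy v)) //= lerDr expR_ge0.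
Qed.
End Ysum.

Lemma exists_kappa (n : nat) (sx : 'I_n -> nat) (hsx : forall i, (0 < sx i)%N)
  (G : pred 'I_n) (T : finType) (t0 : T)
  (hc : (\prod_(i | G i) sx i <= #|T|)%N) (x0 : state sx) :
  exists kappa : state sx -> T,
    (forall x z, (kappa x == kappa z) = [forall i, G i ==> (x i == z i)]) /\
    kappa x0 = t0.
Proof.
pose r (x : state sx) : state sx :=
  [ffun i : 'I_n => if G i then x i else (Ordinal (hsx i) : 'I_(sx i))].
have hr : forall x z, (r x == r z) = [forall i, G i ==> (x i == z i)].
  move=> x z; apply/eqP/forallP => [h i|h].
    apply/implyP => gi; have := congr1 (fun f : state sx => f i) h.
    by rewrite /r !ffunE gi => ->.
  apply/ffunP => i; rewrite /r !ffunE; case: ifP => gi //.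
  by have := h i; rewrite gi => /eqP.
pose I := [set r x | x : state sx].
pose F := fun i : 'I_n => if G i then (predT : pred 'I_(sx i)) else pred1 (Ordinal (hsx i)).
have cI : (#|I| <= #|T|)%N.
  apply: leq_trans hc.
  have sub : I \subset (family F : simpl_pred (state sx)).
    apply/subsetP => f /imsetP [x _ ->]; apply/familyP => i.
    by rewrite /F /r ffunE; case: ifP.
  apply: (leq_trans (subset_leq_card sub)).
  rewrite card_family foldrE big_map big_enum /= [leqRHS]big_mkcond /=.
  apply: leq_prod => i _; rewrite /F; case: ifP => _.
    by rewrite cardT size_enum_ord.
  by rewrite card1.
pose k0 (x : state sx) : T := nth t0 (enum T) (index (r x) (enum I)).
have hk0 : forall x z, (k0 x == k0 z) = (r x == r z).
  move=> x z; have rI : forall y, r y \in enum I by move=> y; rewrite mem_enum; apply: imset_f.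
  rewrite /k0 nth_uniq ?enum_uniq //; last 2 first.
  - by rewrite -cardE; apply: leq_trans cI; rewrite cardE index_mem.
  - by rewrite -cardE; apply: leq_trans cI; rewrite cardE index_mem.
  apply/eqP/eqP => [h|->] //.
  by rewrite -(nth_index (r x) (rI x)) h nth_index.
pose a := k0 x0.
pose sw (u : T) := if u == a then t0 else if u == t0 then a else u.
have swK : involutive sw.
  move=> u; rewrite /sw; case: (eqVneq u a) => [->|ua].
    by rewrite eqxx; case: eqVneq => // ->.
  case: (eqVneq u t0) => [->|ut]; first by rewrite eqxx.
  by rewrite (negbTE ua) (negbTE ut).
exists (fun x => sw (k0 x)); split.
  by move=> x z; rewrite (inj_eq (inv_inj swK)) hk0 hr.
by rewrite /sw /a eqxx.
Qed.

Lemma sum_split (R : realType) (n : nat) (j : 'I_n) (G : pred 'I_n) (hG : ~~ G j)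
  (a : 'I_n -> R) (f : 'I_n -> R) :
  \sum_i (if i == j then a i else if G i then f i else 0) = a j + \sum_(i | G i) f i.
Proof.
rewrite (bigD1 j) //= eqxx; congr (_ + _).
rewrite [RHS]big_mkcond [RHS](bigD1 j) //= (negbTE hG) add0r.
by apply: eq_bigr => i /negbTE ->.
Qed.

Lemma sum_single (R : realType) (n : nat) (j : 'I_n) (a : R) :
  \sum_i (if i == j then a else 0) = a.
Proof. by rewrite (bigD1 j) //= eqxx big1 ?addr0 // => i /negbTE ->. Qed.

Unset Implicit Arguments.


Theorem corollary1 (R : realType) (n m : nat) (sx : 'I_n -> nat)
  (sy : 'I_m -> nat) (k : nat)
  (hsx : forall i, (0 < sx i)%N) (hsy : forall j, (0 < sy j)%N)
  (hk1 : (1 <= k)%N) (hkn : (k <= n)%N)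
  (hcond : ((\prod_(i : 'I_n | (i < k)%N) sx i)%:R
              / (\max_(i : 'I_n | (i < k)%N) sx i)%:R : R)
           <= (1 + \sum_(j : 'I_m) (sy j - 1))%:R) :
  forall p : state sx -> R,
    in_partition_model (prefix_blocks sx k) p ->
    forall eps : R, 0 < eps ->
      exists Theta : feat sx -> feat sy -> R,
        forall x : state sx, `|p x - rbm Theta x| < eps.
Proof.
move=> p hp eps heps.
have [lam [lam0 [lam1 hpl]]] := hp.
have unif0 : forall (A : {set state sx}) x, 0 <= unif R A x.
  by move=> A x; rewrite /unif divr_ge0.
have P0 : forall x, 0 <= p x.
  by move=> x; rewrite hpl; apply: sumr_ge0 => A hA; rewrite mulr_ge0 ?lam0.
have P1 : \sum_x p x = 1.
  under eq_bigr => x _ do rewrite hpl.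
  rewrite exchange_big /= -lam1; apply: eq_bigr => A hA.
  rewrite -mulr_sumr.
  have -> : \sum_x unif R A x = 1.
    rewrite /unif -mulr_suml.
    have -> : \sum_(x : state sx) ((x \in A)%:R : R) = (#|A|%:R : R).
      rewrite -sum1_card natr_sum [RHS]big_mkcond /=.
      by apply: eq_bigr => x _; case: (x \in A).
    case/imsetP: hA => z _ ->; rewrite divff // pnatr_eq0 -lt0n.
    apply/card_gt0P; exists z; rewrite inE; apply/forallP => i; exact/implyP.
  by rewrite mulr1.
have P2 : forall x z : state sx, (forall i : 'I_n, (i < k)%N -> x i = z i) -> p x = p z.
  move=> x z h; rewrite !hpl; apply: eq_bigr => A /imsetP [w _ ->].
  congr (_ * _); rewrite /unif; congr (_%:R / _).
  congr (nat_of_bool _); rewrite !inE.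
  apply/idP/idP => /forallP H; apply/forallP => i; have := H i;
    case: (ltnP i k) => hi //=; by rewrite h.
have hA : (0 < #|[pred i : 'I_n | (i < k)%N]|)%N.
  apply/card_gt0P; have h0 : (0 < n)%N by lia.
  by exists (Ordinal h0); rewrite inE /=; lia.
have [js hjs hmax] := eq_bigmax_cond sx hA.
have hmax' : (\max_(i : 'I_n | (i < k)%N) sx i = sx js)%N.
  by rewrite -hmax; apply: eq_bigl => i; rewrite inE.
have hjk : (js < k)%N by move: hjs; rewrite inE.
pose G := fun i : 'I_n => (i < k)%N && (i != js).
have Gjs : G js = false by rewrite /G eqxx andbF.
have hprod : (\prod_(i : 'I_n | (i < k)%N) sx i = sx js * \prod_(i : 'I_n | G i) sx i)%N.
  by rewrite (bigD1 js).
have hN : (\prod_(i : 'I_n | G i) sx i <= #|feat sy|)%N.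
  have : ((\prod_(i : 'I_n | G i) sx i)%:R : R) <= (1 + \sum_(j : 'I_m) (sy j - 1))%:R.
    move: hcond; rewrite hprod hmax' natrM [X in X / _]mulrC mulfK //.
    by rewrite pnatr_eq0 -lt0n hsx.
  rewrite ler_nat => h; apply: leq_trans h _.
  rewrite /feat card_option card_tagged sumnE big_map big_enum /= add1n.
  by apply: eq_leq; congr _.+1; apply: eq_bigr => j _; rewrite card_ord subn1.
pose x0 : state sx := [ffun i : 'I_n => (Ordinal (hsx i) : 'I_(sx i))].
have [kap [hkap kx0]] := exists_kappa hsx (None : feat sy) hN x0.
have agreeK : forall x z : state sx, kap x = kap z -> val (x js) = val (z js) -> p x = p z.
  move=> x z e ej; apply: P2 => i hi.
  case: (eqVneq i js) => [->|nij]; first by apply: val_inj.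
  have := hkap x z; rewrite e eqxx => /esym/forallP/(_ i).
  by rewrite /G hi nij /= => /eqP.
pose NX : R := #|state sx|%:R.
pose NY : R := #|state sy|%:R.
have NX0 : 0 <= NX by [].
have NY0 : 0 <= NY by [].
pose e1 := eps / (4 * (NX + 1)).
have e1p : 0 < e1 by rewrite /e1 divr_gt0 // mulr_gt0 //; lra.
pose d := Num.min 1 e1.
have d0 : 0 < d by rewrite /d lt_min e1p andbT.
have d1 : d <= 1 by rewrite /d ge_min lexx.
have de : d <= e1 by rewrite /d ge_min lexx orbT.
pose U := ln (1 + d).
have U0 : 0 <= U by rewrite /U ln_ge0 //; lra.
have lnd0 : ln d <= 0 by rewrite ln_le0.
pose Tb := 2 * NY / e1.
have Tb0 : 0 <= Tb by rewrite /Tb divr_ge0 //; [lra | apply: ltW].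
pose M := U - ln d + Tb * n%:R + Tb.
have M0 : 0 <= M by have := mulr_ge0 Tb0 (ler0n R n); rewrite /M; lra.
have px1 : forall x, p x <= 1.
  by move=> x; rewrite -P1 (bigD1 x) //= lerDl sumr_ge0.
pose q x := p x + d.
have q0 : forall x, 0 < q x by move=> x; have := P0 x; rewrite /q; lra.
pose lq x := ln (q x).
have lqb : forall x, ln d <= lq x <= U.
  move=> x; rewrite /lq /U !ler_ln ?posrE ?q0 //.
  - by have := P0 x; have := px1 x; rewrite /q; lra.
  - lra.
pose ell (v : feat sy) (c : nat) :=
  if [pick x' | (kap x' == v) && (val (x' js) == c)] is Some x' then lq x' else 0.
have ellb : forall v c, ln d <= ell v c <= U.
  move=> v c; rewrite /ell; case: pickP => [x' _|_]; first exact: lqb.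
  by rewrite lnd0.
have elle : forall x, ell (kap x) (val (x js)) = lq x.
  move=> x; rewrite /ell; case: pickP => [x' /andP [/eqP e /eqP ej]|h].
    by rewrite /lq /q (agreeK x' x).
  by have := h x; rewrite !eqxx.
pose dG (x z : state sx) : R := \sum_(i | G i) ((val (x i) != val (z i))%:R : R).
have dG0 : forall x z, kap x = kap z -> dG x z = 0.
  move=> x z e; apply: big1 => i gi.
  have := hkap x z; rewrite e eqxx => /esym/forallP/(_ i); rewrite gi /= => /eqP ->.
  by rewrite eqxx.
have dG1 : forall x z, kap x != kap z -> 1 <= dG x z.
  move=> x z; rewrite hkap => /forallPn [i]; rewrite negb_imply => /andP [gi ne].
  rewrite /dG (bigD1 i) //= val_eqE ne lerDl; apply: sumr_ge0 => j _.
  by case: (_ != _).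
have dGn : forall x z, dG x z <= n%:R.
  move=> x z; rewrite /dG big_mkcond /=.
  have H : \sum_(i < n) (if G i then ((val (x i) != val (z i))%:R : R) else 0)
      <= \sum_(i < n) (1 : R).
    by apply: ler_sum => i _; case: (G i) => //; case: (_ != _).
  by apply: le_trans H _; rewrite sumr_const card_ord.
have dGp : forall x z, 0 <= dG x z.
  by move=> x z; apply: sumr_ge0 => i _; case: (_ != _).
have dGc : forall x x' z, kap x = kap x' -> dG x z = dG x' z.
  move=> x x' z e; apply: eq_bigr => i gi.
  have := hkap x x'; rewrite e eqxx => /esym/forallP/(_ i); rewrite gi /= => /eqP ->.
  by [].
pose rep (v : feat sy) := [pick x' | kap x' == v].
pose PhiN (i : 'I_n) (c : nat) : R :=
  if i == js then ell None c
  else if G i then - Tb * ((c != val (x0 i))%:R) else 0.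
pose PhiS (w : {j : 'I_m & 'I_(sy j).-1}) (i : 'I_n) (c : nat) : R :=
  if rep (Some w) is Some z then
    (if i == js then ell (Some w) c - ell None c + Tb * dG z x0
     else if G i then - M * ((c != val (z i))%:R) else 0)
  else (if i == js then - Tb else 0).
pose Phi (v : feat sy) := if v is Some w then PhiS w else PhiN.
exists (ThetaOf Phi).
have BN : forall x, Bof PhiN x = ell None (val (x js)) + (- Tb) * dG x x0.
  move=> x; rewrite /Bof /PhiN (sum_split (G:=G)) ?Gjs //.
  by rewrite /dG mulr_sumr.
have BS : forall x w z, rep (Some w) = Some z -> Bof (PhiS w) x =
    ell (Some w) (val (x js)) - ell None (val (x js)) + Tb * dG z x0 + (- M) * dG x z.
  move=> x w z hz; rewrite /Bof /PhiS hz (sum_split (G:=G)) ?Gjs //.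
  by congr (_ + _); rewrite /dG mulr_sumr.
have BS0 : forall (x : state sx) (w : {j : 'I_m & 'I_(sy j).-1}), rep (Some w) = None -> Bof (PhiS w) x = - Tb.
  by move=> x w hz; rewrite /Bof /PhiS hz sum_single.
have repS : forall w z, rep (Some w) = Some z -> kap z = Some w.
  by move=> w z; rewrite /rep; case: pickP => // z' /eqP e [<-].
have key : forall x, q x <= rbm_weight (ThetaOf Phi) x <= q x + NY * expR (U - Tb).
  move=> x; rewrite weight_eq.
  have := @ysum R m sy hsy (Bof (Phi None) x) (fun s => Bof (Phi (Some s)) x) (kap x) (lq x) U Tb.
  rewrite /Fy lnK ?posrE ?q0 //; apply => //; last by case/andP: (lqb x).
  - case E: (kap x) => [w|] /=.
      have [z hz] : exists z, rep (Some w) = Some z.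
        rewrite /rep; case: pickP => [z _|h]; first by exists z.
        by have := h x; rewrite E eqxx.
      rewrite BN (BS x w z hz) (dG0 x z); last by rewrite (repS _ _ hz).
      rewrite (dGc z x); last by rewrite (repS _ _ hz).
      by rewrite -E elle; ring.
    by rewrite BN dG0 ?E // -E elle; ring.
  - move=> s ns /=; case E: (rep (Some s)) => [z|]; last by rewrite BS0.
    rewrite (BS x s z E).
    have h1 : 1 <= dG x z by apply: dG1; rewrite (repS _ _ E) eq_sym.
    have h2 := ellb (Some s) (val (x js)); have h3 := ellb None (val (x js)).
    have h4 : Tb * dG z x0 <= Tb * n%:R by apply: ler_wpM2l.
    have h5 : M <= M * dG x z by rewrite -[leLHS]mulr1; apply: ler_wpM2l.
    rewrite /M in h5 *; lra.
  - move=> nN /=; rewrite BN.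
    have h1 : 1 <= dG x x0 by apply: dG1; rewrite kx0.
    have h5 : Tb <= Tb * dG x x0 by rewrite -[leLHS]mulr1; apply: ler_wpM2l.
    have h3 := ellb None (val (x js)); lra.
have e_le : NY * expR (U - Tb) <= e1.
  rewrite expRB /U lnK ?posrE; last lra.
  rewrite mulrA ler_pdivrMr ?expR_gt0 //.
  have h1 := expR_ge1Dx Tb.
  have h2 : e1 * Tb = 2 * NY by rewrite /Tb mulrC divfK // gt_eqF.
  have h3 : e1 * (1 + Tb) <= e1 * expR Tb by apply: ler_wpM2l => //; apply: ltW.
  nra.
move=> x; rewrite /rbm.
have := @normalize R (state sx) p (rbm_weight (ThetaOf Phi)) d (NY * expR (U - Tb))
  P0 P1 (ltW d0) (mulr_ge0 NY0 (ltW (expR_gt0 _))) key x.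
move=> h; apply: le_lt_trans h _.
have : (NX + 1) * (d + NY * expR (U - Tb)) <= (NX + 1) * (2 * e1).
  by apply: ler_wpM2l; lra.
have : (NX + 1) * (2 * e1) = eps / 2 by rewrite /e1; field; lra.
rewrite /NX; lra.
Qed.
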